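(* Let $\mathcal{N}$ be a countably infinite set and $K$ a group acting on $\mathcal{N}$ with no finite orbits. Let $\mathrm{LO}(\mathcal{N})\subseteq\{0,1\}^{\mathcal{N}^2}$ be the compact space of linear orderings of $\mathcal{N}$, on which $K$ acts by $x<^{g\cdot L}y\Leftrightarrow g^{-1}x<^L g^{-1}y$, and let $\lambda$ be the uniform measure on $\mathrm{LO}(\mathcal{N})$, i.e. the Borel probability measure with $\lambda(\{L: a_1<^L\dots<^L a_k\})=1/k!$ for all $k$ and all distinct $a_1,\dots,a_k\in\mathcal{N}$. Then $\lambda$ is $K$-ergodic: every Borel set $A\subseteq\mathrm{LO}(\mathcal{N})$ with $\lambda(A\triangle g\cdot A)=0$ for all $g\in K$ satisfies $\lambda(A)\in\{0,1\}$. *)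

(* Defs.v *)
From Stdlib Require Import Reals List Bool Arith.
Import ListNotations.
Open Scope R_scope.

Set Implicit Arguments.

Record Group := {
  gcar :> Type;
  gmul : gcar -> gcar -> gcar;
  gone : gcar;
  ginv : gcar -> gcar;
  gmul_assoc : forall a b c, gmul a (gmul b c) = gmul (gmul a b) c;
  gmul_1l : forall a, gmul gone a = a;
  gmul_Vl : forall a, gmul (ginv a) a = gone
}.

Record Action (K : Group) (N : Type) := {
  act :> K -> N -> N;
  act_one : forall x, act (gone K) x = x;
  act_mul : forall g h x, act (gmul K g h) x = act g (act h x)
}.

Definition countably_infinite (N : Type) : Prop :=
  exists f : nat -> N, (forall m n, f m = f n -> m = n) /\ (forall x, exists n, f n = x).

Definition no_finite_orbits (K : Group) (N : Type) (a : Action K N) : Prop :=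
  forall x : N, ~ exists l : list N, forall g : K, In (a g x) l.

(* a point of {0,1}^(N^2) is a map N -> N -> bool; L x y = true means x <^L y *)
Definition is_lo (N : Type) (R : N -> N -> bool) : Prop :=
  (forall x, R x x = false) /\
  (forall x y z, R x y = true -> R y z = true -> R x z = true) /\
  (forall x y, x <> y -> R x y = true \/ R y x = true).

Definition LO (N : Type) := { R : N -> N -> bool | is_lo R }.

Definition lt_lo (N : Type) (L : LO N) (x y : N) : bool := proj1_sig L x y.

Lemma act_inj (K : Group) (N : Type) (a : Action K N) (g : K) (x y : N) :
  a g x = a g y -> x = y.
Proof.
  intro H. rewrite <- (act_one a x), <- (act_one a y), <- (gmul_Vl K g).
  rewrite !act_mul, H. reflexivity.
Qed.

Lemma is_lo_act (K : Group) (N : Type) (a : Action K N) (g : K) (L : LO N) :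
  is_lo (fun x y => proj1_sig L (a (ginv K g) x) (a (ginv K g) y)).
Proof.
  destruct L as [R [H1 [H2 H3]]]; simpl. split; [|split].
  - intro; apply H1.
  - intros x y z; apply H2.
  - intros x y Hxy. apply H3. intro E. apply Hxy. exact (act_inj a _ _ _ E).
Qed.

Definition act_lo (K : Group) (N : Type) (a : Action K N) (g : K) (L : LO N) : LO N :=
  exist _ _ (is_lo_act a g L).

(* g . A = { g . L | L in A } = { L | g^-1 . L in A } *)
Definition act_set (K : Group) (N : Type) (a : Action K N) (g : K)
  (A : LO N -> Prop) : LO N -> Prop :=
  fun L => A (act_lo a (ginv K g) L).

Definition symdiff (X : Type) (A B : X -> Prop) : X -> Prop :=
  fun x => (A x /\ ~ B x) \/ (B x /\ ~ A x).

(* The Borel sigma-algebra of the (second countable) subspace LO(N) of the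
   product space {0,1}^(N^2) is generated by the subbasic clopen sets
   {L | x <^L y}. *)
Inductive borel (N : Type) : (LO N -> Prop) -> Prop :=
  | borel_gen : forall x y, borel (fun L => lt_lo L x y = true)
  | borel_compl : forall A, borel A -> borel (fun L => ~ A L)
  | borel_union : forall A : nat -> LO N -> Prop,
      (forall n, borel (A n)) -> borel (fun L => exists n, A n L)
  | borel_ext : forall A B, borel A -> (forall L, A L <-> B L) -> borel B.

(* Borel probability measure on LO(N) (values on non-Borel sets irrelevant) *)
Definition borel_prob_measure (N : Type) (mu : (LO N -> Prop) -> R) : Prop :=
  (forall A, borel A -> 0 <= mu A) /\
  mu (fun _ => True) = 1 /\
  (forall A : nat -> LO N -> Prop,
     (forall n, borel (A n)) ->
     (forall m n L, m <> n -> A m L -> A n L -> False) ->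
     infinite_sum (fun n => mu (A n)) (mu (fun L => exists n, A n L))).

Fixpoint chain (N : Type) (L : LO N) (l : list N) : Prop :=
  match l with
  | [] => True
  | x :: l' =>
      match l' with
      | [] => True
      | y :: _ => lt_lo L x y = true /\ chain L l'
      end
  end.

Definition uniform_lo (N : Type) (mu : (LO N -> Prop) -> R) : Prop :=
  borel_prob_measure mu /\
  (forall l : list N, NoDup l -> mu (fun L => chain L l) = / INR (fact (length l))).

Definition ergodic (K : Group) (N : Type) (a : Action K N) (mu : (LO N -> Prop) -> R) : Prop :=
  forall A : LO N -> Prop, borel A ->
    (forall g : K, mu (symdiff A (act_set a g A)) = 0) ->
    mu A = 0 \/ mu A = 1.

(* Main.v *)
Require Import Defs.
From Stdlib Require Import Reals List Permutation Classical FunctionalExtensionality PropExtensionality Lra Lia Arith.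
Import ListNotations.
Open Scope R_scope.

Section Gen.
Variable N : Type.
Variable n0 : N.

Lemma sext (A B : LO N -> Prop) : (forall L, A L <-> B L) -> A = B.
Proof. intro H; apply functional_extensionality; intro L; apply propositional_extensionality; apply H. Qed.

Lemma lt_irr (L : LO N) x : lt_lo L x x = false.
Proof. destruct L as [Rr Hr]; unfold lt_lo; simpl; apply Hr. Qed.

Lemma lt_trans (L : LO N) x y z : lt_lo L x y = true -> lt_lo L y z = true -> lt_lo L x z = true.
Proof. destruct L as [Rr Hr]; unfold lt_lo; simpl; apply Hr. Qed.

Lemma lt_tot (L : LO N) x y : x <> y -> lt_lo L x y = true \/ lt_lo L y x = true.
Proof. destruct L as [Rr Hr]; unfold lt_lo; simpl; apply Hr. Qed.

Lemma lt_asym (L : LO N) x y : lt_lo L x y = true -> lt_lo L y x = false.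
Proof. intro H. destruct (lt_lo L y x) eqn:E; auto.
  pose proof (lt_trans L x y x H E). rewrite lt_irr in H0; discriminate. Qed.

Lemma b_true : borel (fun _ : LO N => True).
Proof. apply borel_ext with (fun L => ~ (lt_lo L n0 n0 = true)). apply borel_compl, borel_gen.
 intro L; split; auto. intros _. rewrite lt_irr; discriminate. Qed.

Lemma b_false : borel (fun _ : LO N => False).
Proof. apply borel_ext with (fun L => ~ True). apply borel_compl, b_true. tauto. Qed.

Lemma b_or (A B : LO N -> Prop) : borel A -> borel B -> borel (fun L => A L \/ B L).
Proof. intros HA HB.
  apply borel_ext with (fun L => exists n : nat, (match n with O => A | _ => B end) L).
  - apply borel_union. intros [|n]; auto.
  - intro L; split. intros [[|n] H]; auto. intros [H|H]. exists O; auto. exists 1%nat; auto. Qed.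

Lemma b_and (A B : LO N -> Prop) : borel A -> borel B -> borel (fun L => A L /\ B L).
Proof. intros HA HB. apply borel_ext with (fun L => ~ (~ A L \/ ~ B L)).
  apply borel_compl, b_or; apply borel_compl; auto. intro L; tauto. Qed.

Lemma b_diff (A B : LO N -> Prop) : borel A -> borel B -> borel (fun L => A L /\ ~ B L).
Proof. intros; apply b_and; auto; apply borel_compl; auto. Qed.

Lemma b_sd (A B : LO N -> Prop) : borel A -> borel B -> borel (symdiff A B).
Proof. intros; unfold symdiff; apply b_or; apply b_diff; auto. Qed.

Lemma b_exlist {X : Type} (E : X -> LO N -> Prop) (l : list X) :
  (forall x, In x l -> borel (E x)) -> borel (fun L => exists x, In x l /\ E x L).
Proof. induction l as [|x l IH]; intro H.
  - apply borel_ext with (fun _ => False). apply b_false. intro L; split; [tauto|]. intros [y [[] _]].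
  - apply borel_ext with (fun L => E x L \/ exists y, In y l /\ E y L).
    apply b_or. apply H; simpl; auto. apply IH; intros; apply H; simpl; auto.
    intro L; split. intros [H1|[y [H1 H2]]]. exists x; simpl; auto. exists y; simpl; auto.
    intros [y [[<-|H1] H2]]; auto. right; exists y; auto. Qed.

Lemma b_chain (r : list N) : borel (fun L => chain L r).
Proof. induction r as [|x r IH].
  - simpl. apply b_true.
  - destruct r as [|y r']. simpl. apply b_true.
    simpl. apply b_and. apply borel_gen. apply IH. Qed.

Section Meas.
Variable mu : (LO N -> Prop) -> R.
Hypothesis Hmu : borel_prob_measure mu.

Lemma m_ge0 A : borel A -> 0 <= mu A.
Proof. apply Hmu. Qed.

Lemma m_true : mu (fun _ => True) = 1.
Proof. apply Hmu. Qed.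

Lemma m_empty : mu (fun _ => False) = 0.
Proof.
  destruct Hmu as [_ [_ H]].
  pose proof (H (fun _ => fun _ => False) (fun _ => b_false) (fun m n L _ F _ => F)) as HS. cbv beta in HS.
  replace (fun L : LO N => exists _ : nat, False) with (fun _ : LO N => False) in HS
    by (apply sext; intro; split; [tauto| intros [_ []]]).
  set (c := mu (fun _ => False)) in *.
  destruct (Req_dec c 0) as [E|E]; auto. exfalso.
  assert (Hp : Rabs c / 2 > 0) by (apply Rabs_pos_lt in E; lra).
  destruct (HS _ Hp) as [M HM].
  pose proof (HM M (Nat.le_refl _)) as H1. pose proof (HM (S M) (Nat.le_succ_diag_r _)) as H2.
  unfold Rdist in *. simpl in H2. set (s := sum_f_R0 (fun _ => c) M) in *.
  clearbody s c. split_Rabs; lra.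
Qed.

Lemma m_add A B : borel A -> borel B -> (forall L, A L -> B L -> False) ->
  mu (fun L => A L \/ B L) = mu A + mu B.
Proof.
  intros HA HB D. destruct Hmu as [_ [_ H]].
  set (E := fun n : nat => match n with O => A | 1%nat => B | _ => fun _ : LO N => False end).
  assert (HE : forall n, borel (E n)) by (intros [|[|n]]; simpl; auto; apply b_false).
  assert (HD : forall m n L, m <> n -> E m L -> E n L -> False).
  { intros [|[|m]] [|[|n]] L Hmn; simpl; try tauto; try lia; eauto. }
  pose proof (H E HE HD) as HS.
  replace (fun L : LO N => exists n, E n L) with (fun L => A L \/ B L) in HS.
  2:{ apply sext; intro L; split. intros [H1|H1]. exists O; auto. exists 1%nat; auto.
      intros [[|[|n]] H1]; simpl in H1; tauto. }
  apply (uniqueness_sum (fun n => mu (E n))); auto.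
  assert (K : forall n, sum_f_R0 (fun n => mu (E n)) (S n) = mu A + mu B).
  { induction n. simpl. reflexivity. simpl sum_f_R0 in *. rewrite IHn. simpl. rewrite m_empty. ring. }
  intros eps Heps. exists 1%nat. intros n Hn. destruct n. lia. rewrite K. unfold Rdist.
  replace (mu A + mu B - (mu A + mu B)) with 0 by ring. rewrite Rabs_R0; lra.
Qed.

Lemma m_compl A : borel A -> mu (fun L => ~ A L) = 1 - mu A.
Proof. intro HA. pose proof (m_add A (fun L => ~ A L) HA (borel_compl HA) (fun L a b => b a)). cbv beta in H.
  replace (fun L => A L \/ ~ A L) with (fun _ : LO N => True) in H by (apply sext; intro; tauto).
  rewrite m_true in H. lra. Qed.

Lemma m_mono A B : borel A -> borel B -> (forall L, A L -> B L) -> mu A <= mu B.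
Proof. intros HA HB S.
  pose proof (m_add A (fun L => B L /\ ~ A L) HA (b_diff _ _ HB HA) (fun L a b => proj2 b a)). cbv beta in H.
  replace (fun L => A L \/ (B L /\ ~ A L)) with B in H by (apply sext; intro L; split; [intro; tauto| intros [|[]]; auto]).
  pose proof (m_ge0 _ (b_diff _ _ HB HA)). lra. Qed.

Lemma m_le1 A : borel A -> mu A <= 1.
Proof. intro; rewrite <- m_true; apply m_mono; auto using b_true. Qed.

Lemma m_diff A B : borel A -> borel B -> (forall L, A L -> B L) -> mu (fun L => B L /\ ~ A L) = mu B - mu A.
Proof. intros HA HB S.
  pose proof (m_add A (fun L => B L /\ ~ A L) HA (b_diff _ _ HB HA) (fun L a b => proj2 b a)). cbv beta in H.
  replace (fun L => A L \/ (B L /\ ~ A L)) with B in H by (apply sext; intro L; split; [intro; tauto| intros [|[]]; auto]).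
  lra. Qed.

Lemma m_sub A B : borel A -> borel B -> mu (fun L => A L \/ B L) <= mu A + mu B.
Proof. intros HA HB.
  pose proof (m_add A (fun L => B L /\ ~ A L) HA (b_diff _ _ HB HA) (fun L a b => proj2 b a)). cbv beta in H.
  replace (fun L => A L \/ (B L /\ ~ A L)) with (fun L => A L \/ B L) in H by (apply sext; intro L; tauto).
  pose proof (m_mono (fun L => B L /\ ~ A L) B (b_diff _ _ HB HA) HB (fun L h => proj1 h)). lra. Qed.

Lemma m_sub_le A B C : borel A -> borel B -> borel C -> (forall L, C L -> A L \/ B L) -> mu C <= mu A + mu B.
Proof. intros. eapply Rle_trans. apply (m_mono C (fun L => A L \/ B L)); auto using b_or. apply m_sub; auto. Qed.

Lemma m_sd_bound A B : borel A -> borel B -> Rabs (mu A - mu B) <= mu (symdiff A B).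
Proof. intros HA HB.
  assert (H1 : mu A <= mu B + mu (symdiff A B)).
  { apply m_sub_le; auto using b_sd. intros L H. unfold symdiff. destruct (classic (B L)); tauto. }
  assert (H2 : mu B <= mu A + mu (symdiff A B)).
  { apply m_sub_le; auto using b_sd. intros L H. unfold symdiff. destruct (classic (A L)); tauto. }
  split_Rabs; lra. Qed.

Definition lsum {X : Type} (f : X -> R) (l : list X) := fold_right (fun x s => f x + s) 0 l.

Lemma m_lunion {X : Type} (E : X -> LO N -> Prop) (l : list X) :
  NoDup l -> (forall x, In x l -> borel (E x)) ->
  (forall x y L, In x l -> In y l -> x <> y -> E x L -> E y L -> False) ->
  mu (fun L => exists x, In x l /\ E x L) = lsum (fun x => mu (E x)) l.
Proof.
  induction l as [|x l IH]; intros ND HB HD.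
  - simpl. replace (fun L : LO N => exists x : X, False /\ E x L) with (fun _ : LO N => False).
    apply m_empty. apply sext; intro; split; [tauto| intros [_ [[] _]]].
  - inversion ND as [|? ? Hxl Hnd]; subst. simpl.
    replace (fun L => exists y, (x = y \/ In y l) /\ E y L) with (fun L => E x L \/ exists y, In y l /\ E y L).
    2:{ apply sext; intro L; split. intros [H|[y [H1 H2]]]. exists x; auto. exists y; auto.
        intros [y [[<-|H1] H2]]; auto. right; exists y; auto. }
    rewrite m_add. rewrite IH; auto. intros; apply HB; simpl; auto.
    intros x0 y L Ha Hb Hc Hd He; apply (HD x0 y L); simpl; auto.
    apply HB; simpl; auto. apply b_exlist; intros; apply HB; simpl; auto.
    intros L H1 [y [H2 H3]]. apply (HD x y L); simpl; auto. intro; subst; auto.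
Qed.

Definition Upto (A : nat -> LO N -> Prop) (k : nat) := fun L => exists n, (n < k)%nat /\ A n L.

Lemma Upto_S A k : Upto A (S k) = (fun L => Upto A k L \/ A k L).
Proof. apply sext; intro L; unfold Upto; split.
  intros [n [H1 H2]]. destruct (Nat.eq_dec n k). subst; auto. left; exists n; split; auto; lia.
  intros [[n [H1 H2]]|H]. exists n; split; auto; lia. exists k; split; auto; lia. Qed.

Lemma Upto_0 A : Upto A 0 = (fun _ => False).
Proof. apply sext; intro L; unfold Upto; split. intros [n [H _]]; lia. tauto. Qed.

Lemma b_Upto A k : (forall n, borel (A n)) -> borel (Upto A k).
Proof. intro H; induction k. rewrite Upto_0; apply b_false. rewrite Upto_S; apply b_or; auto. Qed.

Lemma m_cont (A : nat -> LO N -> Prop) : (forall n, borel (A n)) ->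
  forall e, e > 0 -> exists M, mu (fun L => exists n, A n L) - mu (Upto A M) < e.
Proof.
  intros HA e He.
  set (D := fun n L => A n L /\ ~ Upto A n L).
  assert (HD : forall n, borel (D n)) by (intro; apply b_diff; auto using b_Upto).
  assert (Hdis : forall m n L, m <> n -> D m L -> D n L -> False).
  { intros m n L Hmn [H1 H2] [H3 H4]. destruct (Nat.lt_ge_cases m n).
    apply H4; exists m; auto. apply H2; exists n; split; auto; lia. }
  destruct Hmu as [_ [_ Hc]].
  pose proof (Hc D HD Hdis) as HS.
  replace (fun L => exists n, D n L) with (fun L => exists n, A n L) in HS.
  2:{ apply sext; intro L; split.
      - intros [n Hn]. revert Hn. induction n as [n IH] using lt_wf_ind. intro Hn.
        destruct (classic (Upto A n L)) as [[k [Hk1 Hk2]]|Hu]. apply (IH k); auto.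
        exists n; split; auto.
      - intros [n [Hn _]]; exists n; auto. }
  assert (Hps : forall n, mu (Upto A (S n)) = sum_f_R0 (fun n => mu (D n)) n).
  { induction n.
    - simpl. f_equal. apply sext; intro L; unfold D, Upto; split.
      intros [n [Hn Hh]]. assert (n = O) by lia. subst. split; auto. intros [k [Hk _]]; lia.
      intros [Hh _]. exists O; split; auto.
    - simpl sum_f_R0. rewrite <- IHn. rewrite (Upto_S _ (S n)).
      replace (fun L => Upto A (S n) L \/ A (S n) L) with (fun L => Upto A (S n) L \/ D (S n) L).
      rewrite m_add; auto using b_Upto. intros L H1 [_ H2]; auto.
      apply sext; intro L; unfold D. split; intro H. tauto. destruct (classic (Upto A (S n) L)); tauto. }
  assert (He2 : e > 0) by lra.
  destruct (HS e He2) as [K HK]. exists (S K). rewrite Hps.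
  specialize (HK K (Nat.le_refl _)). unfold Rdist in HK. split_Rabs; lra.
Qed.

Definition fin (B : LO N -> Prop) := borel B /\ exists F : list N,
  forall L L', (forall x y, In x F -> In y F -> lt_lo L x y = lt_lo L' x y) -> B L -> B L'.

Lemma approx A : borel A -> forall e, e > 0 -> exists B, fin B /\ mu (symdiff A B) <= e.
Proof.
  induction 1 as [x y|A HA IH|A HA IH|A B HA IH Hext]; intros e He.
  - exists (fun L => lt_lo L x y = true). split.
    + split. apply borel_gen. exists [x; y]. intros L L' H E. rewrite <- H; simpl; auto.
    + replace (symdiff _ _) with (fun _ : LO N => False). rewrite m_empty; lra.
      apply sext; intro; unfold symdiff; tauto.
  - destruct (IH e He) as [B [[HB [F HF]] Hle]]. exists (fun L => ~ B L). split.
    + split. apply borel_compl; auto. exists F. intros L L' H H1 H2. apply H1.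
      apply (HF L' L); auto. intros; symmetry; auto.
    + replace (symdiff (fun L => ~ A L) (fun L => ~ B L)) with (symdiff A B); auto.
      apply sext; intro L; unfold symdiff. destruct (classic (A L)), (classic (B L)); tauto.
  - assert (He2 : e / 2 > 0) by lra.
    destruct (m_cont A HA _ He2) as [M HM].
    set (d := e / (2 * (INR M + 1))).
    assert (Hd : d > 0). { unfold d. pose proof (pos_INR M). apply Rdiv_lt_0_compat; lra. }
    assert (Hd2 : d * (INR M + 1) = e / 2). { unfold d. pose proof (pos_INR M). field. lra. }
    assert (Cl : forall k, exists B, fin B /\ mu (symdiff (Upto A k) B) <= INR k * d).
    { induction k.
      - exists (fun _ => False). split. split. apply b_false. exists (@nil N); tauto.
        rewrite Upto_0. replace (symdiff _ _) with (fun _ : LO N => False). rewrite m_empty; simpl; lra.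
        apply sext; intro; unfold symdiff; tauto.
      - destruct IHk as [B1 [[HB1 [F1 HF1]] H1]]. destruct (IH k d Hd) as [B2 [[HB2 [F2 HF2]] H2]].
        exists (fun L => B1 L \/ B2 L). split.
        + split. apply b_or; auto. exists (F1 ++ F2). intros L L' H [E|E].
          left; apply (HF1 L); auto; intros; apply H; apply in_or_app; auto.
          right; apply (HF2 L); auto; intros; apply H; apply in_or_app; auto.
        + rewrite S_INR. rewrite Upto_S.
          eapply Rle_trans. apply (m_sub_le (symdiff (Upto A k) B1) (symdiff (A k) B2)).
          apply b_sd; auto using b_Upto. apply b_sd; auto. apply b_sd. apply b_or; auto using b_Upto. apply b_or; auto.
          intros L. unfold symdiff. tauto. lra. }
    destruct (Cl M) as [B [HB Hle]]. exists B; split; auto.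
    assert (Hb : borel B) by apply HB.
    eapply Rle_trans.
    apply (m_sub_le (fun L => (exists n, A n L) /\ ~ Upto A M L) (symdiff (Upto A M) B)).
    apply b_diff; auto using b_Upto. apply borel_union; auto. apply b_sd; auto using b_Upto.
    apply b_sd; auto. apply borel_union; auto.
    intros L. unfold symdiff. intros [[H1 H2]|[H1 H2]].
    destruct (classic (Upto A M L)). right; left; auto. left; auto.
    right; right; split; auto. intros [n [_ Hn]]; apply H2; exists n; auto.
    rewrite m_diff; auto using b_Upto. 2: apply borel_union; auto.
    2:{ intros L [n [_ Hn]]; exists n; auto. }
    pose proof (pos_INR M). assert (INR M * d <= e / 2) by nra. lra.
  - replace B with A by (apply sext; auto). auto.
Qed.

End Meas.

Lemma chain_cons (L : LO N) x s : chain L (x :: s) <-> (forall z, In z s -> lt_lo L x z = true) /\ chain L s.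
Proof.
  revert x; induction s as [|y s IH]; intro x.
  - simpl; split; [intros _; split; [intros z []|exact I] | intros _; exact I].
  - change (chain L (x :: y :: s)) with (lt_lo L x y = true /\ chain L (y :: s)).
    split.
    + intros [H1 H2]. split; auto. intros z [<-|Hz]; auto.
      apply (proj1 (IH y) H2) in Hz. eapply lt_trans; eauto.
    + intros [H1 H2]. split; auto. apply H1; simpl; auto.
Qed.

Lemma chain_agree (L L' : LO N) r : NoDup r -> chain L r -> chain L' r ->
  forall x y, In x r -> In y r -> lt_lo L x y = lt_lo L' x y.
Proof.
  induction r as [|z s IH]; intros ND C C' x y Hx Hy. destruct Hx.
  inversion ND as [|? ? Hzs Hnd]; subst.
  apply chain_cons in C; apply chain_cons in C'. destruct C as [C1 C2], C' as [C1' C2'].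
  destruct Hx as [<-|Hx], Hy as [<-|Hy].
  - rewrite !lt_irr; auto.
  - rewrite C1, C1'; auto.
  - rewrite lt_asym by auto. rewrite lt_asym by auto. auto.
  - apply IH; auto.
Qed.

Lemma chain_unique (L : LO N) r1 : forall r2, NoDup r1 -> NoDup r2 -> (forall z, In z r1 <-> In z r2) ->
  chain L r1 -> chain L r2 -> r1 = r2.
Proof.
  induction r1 as [|x s1 IH]; intros r2 N1 N2 E C1 C2.
  - destruct r2 as [|y s2]; auto. exfalso; apply (proj2 (E y)); simpl; auto.
  - destruct r2 as [|y s2]. exfalso; apply (proj1 (E x)); simpl; auto.
    inversion N1 as [|? ? Hx1 Hn1]; subst. inversion N2 as [|? ? Hy2 Hn2]; subst.
    apply chain_cons in C1; apply chain_cons in C2. destruct C1 as [C1 D1], C2 as [C2 D2].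
    destruct (classic (x = y)) as [<-|Hne].
    + f_equal. apply IH; auto. intro z; split; intro Hz.
      * assert (In z (x :: s2)) as [<-|]; [apply E; simpl; auto| contradiction| auto].
      * assert (In z (x :: s1)) as [<-|]; [apply E; simpl; auto| contradiction| auto].
    + exfalso.
      assert (Hxs : In x s2). { destruct (proj1 (E x) (or_introl eq_refl)); auto. congruence. }
      assert (Hys : In y s1). { destruct (proj2 (E y) (or_introl eq_refl)); auto. congruence. }
      pose proof (C1 y Hys). pose proof (C2 x Hxs). rewrite lt_asym in H0; auto. discriminate.
Qed.

Fixpoint ins (x : N) (l : list N) : list (list N) :=
  match l with [] => [[x]] | y :: l' => (x :: l) :: map (cons y) (ins x l') end.
Fixpoint perms (l : list N) : list (list N) :=
  match l with [] => [[]] | x :: l' => flat_map (ins x) (perms l') end.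

Lemma ins_perm x l r : In r (ins x l) -> Permutation r (x :: l).
Proof.
  revert r; induction l as [|y l IH]; intros r H; simpl in H.
  - destruct H as [<-|[]]; auto.
  - destruct H as [<-|H]; auto. apply in_map_iff in H. destruct H as [r' [<- H]].
    apply IH in H. eapply perm_trans. apply perm_skip, H. apply perm_swap.
Qed.

Lemma perms_perm l r : In r (perms l) -> Permutation r l.
Proof.
  revert r; induction l as [|x l IH]; intros r H; simpl in H.
  - destruct H as [<-|[]]; auto.
  - apply in_flat_map in H. destruct H as [r' [H1 H2]]. apply ins_perm in H2.
    eapply perm_trans; eauto.
Qed.

Lemma ins_chain (L : LO N) x l : chain L l -> ~ In x l -> exists r, In r (ins x l) /\ chain L r.
Proof.
  induction l as [|y l IH]; intros C Hx.
  - exists [x]; simpl; auto.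
  - apply chain_cons in C as C'. destruct C' as [C1 C2].
    assert (Hxy : x <> y) by (intro; subst; apply Hx; simpl; auto).
    destruct (lt_tot L x y Hxy) as [H|H].
    + exists (x :: y :: l). split. simpl; auto. apply chain_cons. split; auto.
      intros z [<-|Hz]; auto. eapply lt_trans; eauto.
    + destruct IH as [r' [H1 H2]]; auto. intro; apply Hx; simpl; auto.
      exists (y :: r'). split. simpl. right. apply in_map; auto.
      apply chain_cons; split; auto. intros z Hz.
      apply (Permutation_in z (ins_perm _ _ _ H1)) in Hz. destruct Hz as [<-|Hz]; auto.
Qed.

Lemma perms_chain (L : LO N) l : NoDup l -> exists r, In r (perms l) /\ chain L r.
Proof.
  induction l as [|x l IH]; intro ND.
  - exists []; simpl; auto.
  - inversion ND as [|? ? Hx Hn]; subst. destruct (IH Hn) as [r' [H1 H2]].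
    destruct (ins_chain L x r' H2) as [r [H3 H4]].
    intro H; apply Hx. apply (Permutation_in x (perms_perm _ _ H1)); auto.
    exists r; split; auto. simpl. apply in_flat_map. exists r'; auto.
Qed.

Lemma dedupe {A : Type} (l : list A) : exists l', NoDup l' /\ forall z, In z l <-> In z l'.
Proof.
  induction l as [|x l [l' [H1 H2]]].
  - exists []; split; [constructor| tauto].
  - destruct (classic (In x l')).
    + exists l'; split; auto. intro z; simpl; rewrite H2; split; [intros [<-|]|]; auto.
    + exists (x :: l'); split. constructor; auto. intro z; simpl; rewrite H2; tauto.
Qed.

Definition PL (F : list N) (P : list (list N)) :=
  NoDup P /\ (forall r, In r P -> NoDup r /\ forall z, In z r <-> In z F) /\
  forall L, exists r, In r P /\ chain L r.

Lemma PL_ex F : exists P, PL F P.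
Proof.
  destruct (dedupe F) as [F0 [HF0 EF0]]. destruct (dedupe (perms F0)) as [P [HP EP]].
  exists P. split; auto. split.
  - intros r Hr. apply EP in Hr. apply perms_perm in Hr. split.
    apply Permutation_sym in Hr. eapply Permutation_NoDup; eauto.
    intro z. rewrite EF0. split; intro Hz. apply (Permutation_in z Hr); auto. apply (Permutation_in z (Permutation_sym Hr)); auto.
  - intro L. destruct (perms_chain L F0 HF0) as [r [H1 H2]]. exists r; split; auto. apply EP; auto.
Qed.

Fixpoint merges (p : list N) : list N -> list (list N) :=
  match p with
  | [] => fun q => [q]
  | x :: p' => fix mq (q : list N) : list (list N) :=
      match q with
      | [] => [x :: p']
      | y :: q' => map (cons x) (merges p' (y :: q')) ++ map (cons y) (mq q')
      end
  end.

Lemma merges_cc x p y q : merges (x :: p) (y :: q) =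
  map (cons x) (merges p (y :: q)) ++ map (cons y) (merges (x :: p) q).
Proof. reflexivity. Qed.

Lemma merges_nil p : merges p [] = [p].
Proof. destruct p; reflexivity. Qed.

Lemma merges_perm p : forall q r, In r (merges p q) -> Permutation r (p ++ q).
Proof.
  induction p as [|x p IHp]; intro q.
  - simpl. intros r [<-|[]]; auto.
  - induction q as [|y q IHq]; intros r H.
    + rewrite merges_nil in H. destruct H as [<-|[]]. rewrite app_nil_r; auto.
    + rewrite merges_cc in H. apply in_app_or in H. destruct H as [H|H];
      apply in_map_iff in H; destruct H as [r' [<- H]].
      * apply IHp in H. simpl. apply perm_skip; auto.
      * apply IHq in H. eapply perm_trans. apply perm_skip, H. simpl.
        apply perm_trans with (x :: y :: p ++ q). apply perm_swap. apply perm_skip.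
        apply Permutation_middle.
Qed.

Lemma merges_nodup p : forall q, NoDup (p ++ q) -> NoDup (merges p q).
Proof.
  induction p as [|x p IHp]; intro q.
  - intros _; simpl; repeat constructor; auto.
  - induction q as [|y q IHq]; intro ND.
    + rewrite merges_nil; repeat constructor; auto.
    + rewrite merges_cc.
      assert (ND1 : NoDup (p ++ y :: q)) by (inversion ND; auto).
      assert (ND2 : NoDup ((x :: p) ++ q)) by (apply NoDup_remove_1 in ND; auto).
      assert (Hxy : x <> y).
      { intro E; subst. apply NoDup_remove_2 in ND. apply ND; simpl; auto. }
      apply NoDup_app.
      * apply FinFun.Injective_map_NoDup. intros a b E; injection E; auto. auto.
      * apply FinFun.Injective_map_NoDup. intros a b E; injection E; auto. auto.
      * intros a H1 H2. apply in_map_iff in H1, H2. destruct H1 as [a1 [<- _]].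
        destruct H2 as [a2 [E _]]. injection E; intros; auto.
Qed.

Lemma merges_count p : forall q,
  (length (merges p q) * fact (length p) * fact (length q) = fact (length p + length q))%nat.
Proof.
  induction p as [|x p IHp]; intro q.
  - simpl. lia.
  - induction q as [|y q IHq].
    + rewrite merges_nil. cbn [length]. rewrite Nat.add_0_r. change (fact 0) with 1%nat. lia.
    + rewrite merges_cc, length_app, !length_map.
      specialize (IHp (y :: q)). simpl length in *.
      set (a := length p) in *. set (b := length q) in *.
      set (l1 := length (merges p (y :: q))) in *. set (l2 := length (merges (x :: p) q)) in *.
      assert (E1 : fact (S a + b) = fact (a + S b)) by (f_equal; lia).
      assert (E2 : (fact (S a + S b) = (S a + S b) * fact (a + S b))%nat).
      { replace (S a + S b)%nat with (S (a + S b)) by lia. reflexivity. }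
      rewrite E1 in IHq. rewrite E2.
      change (fact (S a)) with (S a * fact a)%nat in *. change (fact (S b)) with (S b * fact b)%nat in *.
      nia.
Qed.

Lemma merges_chain_ex (L : LO N) p : forall q, chain L p -> chain L q -> NoDup (p ++ q) ->
  exists r, In r (merges p q) /\ chain L r.
Proof.
  induction p as [|x p IHp]; intro q.
  - intros _ Cq _. exists q; simpl; auto.
  - induction q as [|y q IHq]; intros Cp Cq ND.
    + exists (x :: p). rewrite merges_nil; simpl; auto.
    + assert (ND1 : NoDup (p ++ y :: q)) by (inversion ND; auto).
      assert (ND2 : NoDup ((x :: p) ++ q)) by (apply NoDup_remove_1 in ND; auto).
      assert (Hxy : x <> y).
      { intro E; subst. apply NoDup_remove_2 in ND. apply ND; simpl; auto. }
      apply chain_cons in Cp as Cp'. apply chain_cons in Cq as Cq'.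
      destruct Cp' as [Cp1 Cp2], Cq' as [Cq1 Cq2].
      rewrite merges_cc.
      destruct (lt_tot L x y Hxy) as [H|H].
      * destruct (IHp (y :: q) Cp2 Cq ND1) as [r' [H1 H2]].
        exists (x :: r'). split. apply in_or_app; left; apply in_map; auto.
        apply chain_cons; split; auto. intros z Hz.
        apply (Permutation_in z (merges_perm _ _ _ H1)) in Hz.
        apply in_app_or in Hz. destruct Hz as [Hz|[<-|Hz]]; auto. eapply lt_trans; eauto.
      * destruct (IHq Cp Cq2 ND2) as [r' [H1 H2]].
        exists (y :: r'). split. apply in_or_app; right; apply in_map; auto.
        apply chain_cons; split; auto. intros z Hz.
        apply (Permutation_in z (merges_perm _ _ _ H1)) in Hz.
        apply in_app_or in Hz. destruct Hz as [[<-|Hz]|Hz]; auto. eapply lt_trans; eauto.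
Qed.

Lemma merges_chain_sub (L : LO N) p : forall q r, In r (merges p q) -> chain L r -> chain L p /\ chain L q.
Proof.
  induction p as [|x p IHp]; intro q.
  - simpl. intros r [<-|[]] C. simpl; auto.
  - induction q as [|y q IHq]; intros r Hr C.
    + rewrite merges_nil in Hr. destruct Hr as [<-|[]]. simpl; auto.
    + rewrite merges_cc in Hr. apply in_app_or in Hr. destruct Hr as [Hr|Hr];
      apply in_map_iff in Hr; destruct Hr as [r' [<- Hr]]; apply chain_cons in C; destruct C as [C1 C2].
      * destruct (IHp _ _ Hr C2) as [H1 H2]. split; auto. apply chain_cons; split; auto.
        intros z Hz. apply C1. apply (Permutation_in z (Permutation_sym (merges_perm _ _ _ Hr))).
        apply in_or_app; auto.
      * destruct (IHq _ Hr C2) as [H1 H2]. split; auto. apply chain_cons; split; auto.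
        intros z Hz. apply C1. apply (Permutation_in z (Permutation_sym (merges_perm _ _ _ Hr))).
        apply in_or_app; simpl; auto.
Qed.


Lemma lsum_ext {X : Type} (f g : X -> R) l : (forall x, In x l -> f x = g x) -> lsum f l = lsum g l.
Proof. induction l; simpl; intros H; auto. rewrite H, IHl; auto. Qed.

Lemma lsum_const {X : Type} (c : R) (l : list X) : lsum (fun _ => c) l = INR (length l) * c.
Proof. induction l; simpl lsum; [simpl; ring|]. rewrite IHl. rewrite length_cons, S_INR. ring. Qed.

Lemma lsum_mull {X : Type} (c : R) f (l : list X) : lsum (fun x => c * f x) l = c * lsum f l.
Proof. induction l; simpl; [ring|]. rewrite IHl; ring. Qed.

Lemma lsum_mulr {X : Type} (c : R) f (l : list X) : lsum (fun x => f x * c) l = lsum f l * c.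
Proof. induction l; simpl; [ring|]. rewrite IHl; ring. Qed.

Definition finF (F : list N) (B : LO N -> Prop) :=
  forall L L', (forall x y, In x F -> In y F -> lt_lo L x y = lt_lo L' x y) -> B L -> B L'.

Lemma decomp mu (Hmu : borel_prob_measure mu) F P X : PL F P -> borel X ->
  mu X = lsum (fun r => mu (fun L => chain L r /\ X L)) P.
Proof.
  intros [HP [HP1 HP2]] HX.
  rewrite <- (m_lunion mu Hmu (fun r L => chain L r /\ X L)); auto.
  - f_equal. apply sext; intro L; split.
    + intro H. destruct (HP2 L) as [r [H1 H2]]. exists r; auto.
    + intros [r [_ [_ H]]]; auto.
  - intros; apply b_and; auto using b_chain.
  - intros r s L Hr Hs Hne [C1 _] [C2 _]. apply Hne.
    destruct (HP1 r Hr) as [N1 E1], (HP1 s Hs) as [N2 E2].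
    apply (chain_unique L); auto. intro z; rewrite E1, E2; tauto.
Qed.

Lemma term_cases F P B r : PL F P -> In r P -> finF F B ->
  (fun L => chain L r /\ B L) = (fun L => chain L r) \/ (fun L => chain L r /\ B L) = (fun _ => False).
Proof.
  intros [_ [HP1 _]] Hr HB. destruct (HP1 r Hr) as [Nr Er].
  destruct (classic (forall L, chain L r -> B L)) as [H|H].
  - left. apply sext; intro L; split; [tauto|]. intro; split; auto.
  - right. apply not_all_ex_not in H. destruct H as [L0 H0].
    apply sext; intro L; split; [|tauto]. intros [C HBL]. apply H0. intro C0.
    apply (HB L L0); auto. intros x y Hx Hy. apply (chain_agree L L0 r); auto; apply Er; auto.
Qed.

Section Unif.
Variable lam : (LO N -> Prop) -> R.
Hypothesis Hlam : uniform_lo lam.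
Let Hm : borel_prob_measure lam := proj1 Hlam.

Lemma lam_chain r : NoDup r -> lam (fun L => chain L r) = / INR (fact (length r)).
Proof. apply (proj2 Hlam). Qed.

Lemma indep_chain p q : NoDup (p ++ q) ->
  lam (fun L => chain L p /\ chain L q) = / INR (fact (length p)) * / INR (fact (length q)).
Proof.
  intro ND.
  replace (fun L => chain L p /\ chain L q) with (fun L => exists r, In r (merges p q) /\ chain L r).
  2:{ apply sext; intro L; split.
      - intros [r [H1 H2]]. eapply merges_chain_sub; eauto.
      - intros [H1 H2]. apply merges_chain_ex; auto. }
  rewrite (m_lunion lam Hm (fun r L => chain L r)).
  - rewrite (lsum_ext _ (fun _ => / INR (fact (length p + length q)))).
    + rewrite lsum_const. pose proof (merges_count p q) as E.
      apply (f_equal INR) in E. rewrite !mult_INR in E. rewrite <- E.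
      pose proof (INR_fact_neq_0 (length p)). pose proof (INR_fact_neq_0 (length q)).
      assert (INR (length (merges p q)) <> 0).
      { intro Z. rewrite Z in E. pose proof (INR_fact_neq_0 (length p + length q)). lra. }
      field; auto.
    + intros r Hr. pose proof (merges_perm _ _ _ Hr) as Pr. rewrite lam_chain.
      rewrite (Permutation_length Pr), length_app; auto.
      apply (Permutation_NoDup (Permutation_sym Pr)); auto.
  - apply merges_nodup; auto.
  - intros; apply b_chain.
  - intros r s L Hr Hs Hne C1 C2. apply Hne.
    pose proof (merges_perm _ _ _ Hr) as Pr. pose proof (merges_perm _ _ _ Hs) as Ps.
    apply (chain_unique L); auto.
    apply (Permutation_NoDup (Permutation_sym Pr)); auto.
    apply (Permutation_NoDup (Permutation_sym Ps)); auto.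
    intro z; split; intro Hz. apply (Permutation_in z (Permutation_sym Ps)), (Permutation_in z Pr); auto.
    apply (Permutation_in z (Permutation_sym Pr)), (Permutation_in z Ps); auto.
Qed.

Lemma prod_term r s (X1 X2 : LO N -> Prop) : NoDup r -> NoDup s -> NoDup (r ++ s) ->
  (X1 = (fun L => chain L r) \/ X1 = (fun _ => False)) ->
  (X2 = (fun L => chain L s) \/ X2 = (fun _ => False)) ->
  lam (fun L => X1 L /\ X2 L) = lam X1 * lam X2.
Proof.
  intros Nr Ns Nrs [E1|E1] [E2|E2]; subst.
  - rewrite indep_chain, !lam_chain; auto.
  - replace (fun L : LO N => chain L r /\ False) with (fun _ : LO N => False) by (apply sext; tauto).
    rewrite (m_empty lam Hm); ring.
  - replace (fun L : LO N => False /\ chain L s) with (fun _ : LO N => False) by (apply sext; tauto).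
    rewrite (m_empty lam Hm); ring.
  - replace (fun L : LO N => False /\ False) with (fun _ : LO N => False) by (apply sext; tauto).
    rewrite (m_empty lam Hm); ring.
Qed.

Lemma indep_fin F G B C : finF F B -> finF G C -> borel B -> borel C ->
  (forall z, In z F -> ~ In z G) -> lam (fun L => B L /\ C L) = lam B * lam C.
Proof.
  intros FB FC HB HC Hdis.
  destruct (PL_ex F) as [P HP]. destruct (PL_ex G) as [Q HQ].
  rewrite (decomp lam Hm F P _ HP (b_and _ _ HB HC)).
  rewrite (decomp lam Hm F P B HP HB). rewrite (decomp lam Hm G Q C HQ HC).
  rewrite <- lsum_mulr. apply lsum_ext. intros r Hr.
  rewrite (decomp lam Hm G Q _ HQ). 2: apply b_and; [apply b_chain| apply b_and; auto].
  rewrite <- lsum_mull. apply lsum_ext. intros s Hs.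
  replace (fun L => chain L s /\ chain L r /\ B L /\ C L) with
    (fun L => (fun L => chain L r /\ B L) L /\ (fun L => chain L s /\ C L) L)
    by (apply sext; intro; tauto).
  destruct HP as [HPa [HP1 HPb]]. destruct HQ as [HQa [HQ1 HQb]].
  destruct (HP1 r Hr) as [Nr Er]. destruct (HQ1 s Hs) as [Ns Es].
  apply (prod_term r s); auto.
  apply NoDup_app; auto. intros z Hz1 Hz2. apply (Hdis z); [apply Er| apply Es]; auto.
  apply (term_cases F P); auto. split; auto.
  apply (term_cases G Q); auto. split; auto.
Qed.

End Unif.

Lemma small_zero x : (forall e, e > 0 -> Rabs x <= e) -> x = 0.
Proof. intro H. destruct (Req_dec x 0); auto. exfalso.
  assert (Rabs x / 2 > 0) by (apply Rabs_pos_lt in H0; lra). specialize (H _ H1).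
  pose proof (Rabs_pos x). lra. Qed.

Lemma inf_sum_avg (u v : nat -> R) A B : infinite_sum u A -> infinite_sum v B ->
  infinite_sum (fun n => (u n + v n) / 2) ((A + B) / 2).
Proof.
  intros HA HB e He.
  assert (Hs : forall n, sum_f_R0 (fun n => (u n + v n) / 2) n = (sum_f_R0 u n + sum_f_R0 v n) / 2).
  { induction n; simpl; [lra|]. rewrite IHn; lra. }
  destruct (HA e He) as [N1 H1]. destruct (HB e He) as [N2 H2].
  exists (max N1 N2). intros n Hn. rewrite Hs. unfold Rdist in *.
  specialize (H1 n ltac:(lia)). specialize (H2 n ltac:(lia)). split_Rabs; lra.
Qed.

Lemma avg_prob (mu1 mu2 : (LO N -> Prop) -> R) : borel_prob_measure mu1 -> borel_prob_measure mu2 ->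
  borel_prob_measure (fun X => (mu1 X + mu2 X) / 2).
Proof.
  intros [P1 [T1 C1]] [P2 [T2 C2]]. split; [|split].
  - intros A HA. specialize (P1 A HA). specialize (P2 A HA). lra.
  - rewrite T1, T2; lra.
  - intros A HA HD. apply inf_sum_avg; auto.
Qed.

Section Grp.
Variable K : Group.
Variable a : Action K N.

Lemma gmul_Vr g : gmul K g (ginv K g) = gone K.
Proof.
  set (b := ginv K g).
  assert (E : gmul K b (gmul K g b) = b) by (rewrite gmul_assoc; unfold b; rewrite gmul_Vl, gmul_1l; auto).
  rewrite <- (gmul_1l K (gmul K g b)). rewrite <- (gmul_Vl K b) at 1.
  rewrite <- gmul_assoc, E. apply gmul_Vl.
Qed.

Lemma ginv_inv g : ginv K (ginv K g) = g.
Proof.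
  rewrite <- (gmul_1l K g) at 2. rewrite <- (gmul_Vl K (ginv K g)).
  rewrite <- gmul_assoc, gmul_Vl.
  assert (R1 : forall h, gmul K h (gone K) = h).
  { intro h. rewrite <- (gmul_Vl K h). rewrite gmul_assoc, gmul_Vr, gmul_1l. auto. }
  rewrite R1; auto.
Qed.

Lemma act_VK g x : a (ginv K g) (a g x) = x.
Proof. rewrite <- act_mul, gmul_Vl, act_one; auto. Qed.

Lemma act_chain g r : act_set a g (fun L => chain L r) = fun L => chain L (map (a (ginv K (ginv K g))) r).
Proof.
  apply sext; intro L. unfold act_set. induction r as [|x s IH]. simpl; tauto.
  simpl map. rewrite !chain_cons, IH. split; intros [H1 H2]; split; auto.
  - intros z Hz. apply in_map_iff in Hz. destruct Hz as [w [<- Hw]]. exact (H1 w Hw).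
  - intros z Hz. exact (H1 _ (in_map _ _ _ Hz)).
Qed.

Lemma b_act g X : borel X -> borel (act_set a g X).
Proof.
  induction 1 as [x y|A HA IH|A HA IH|A B HA IH Hext].
  - apply borel_ext with (fun L => lt_lo L (a (ginv K (ginv K g)) x) (a (ginv K (ginv K g)) y) = true).
    apply borel_gen. intro L; unfold act_set; simpl; tauto.
  - apply borel_ext with (fun L => ~ act_set a g A L). apply borel_compl; auto. intro; unfold act_set; tauto.
  - apply borel_ext with (fun L => exists n, act_set a g (A n) L). apply borel_union; auto.
    intro; unfold act_set; tauto.
  - apply borel_ext with (act_set a g A); auto. intro L; unfold act_set; apply Hext.
Qed.

Lemma fin_act g F B : finF F B -> finF (map (a (ginv K (ginv K g))) F) (act_set a g B).
Proof.
  unfold finF, act_set. intros HB L L' H. apply HB. intros x y Hx Hy.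
  exact (H _ _ (in_map _ _ _ Hx) (in_map _ _ _ Hy)).
Qed.

Lemma mug_prob (lam : (LO N -> Prop) -> R) g : borel_prob_measure lam -> borel_prob_measure (fun X => lam (act_set a g X)).
Proof.
  intros [P [T C]]. split; [|split].
  - intros A HA; apply P, b_act; auto.
  - exact T.
  - intros A HA HD. exact (C (fun n => act_set a g (A n)) (fun n => b_act g _ (HA n))
      (fun m n L Hmn H1 H2 => HD m n _ Hmn H1 H2)).
Qed.

Lemma fin_inv (lam : (LO N -> Prop) -> R) (Hlam : uniform_lo lam) g F B : finF F B -> borel B -> lam (act_set a g B) = lam B.
Proof.
  intros FB HB. destruct (PL_ex F) as [P HP].
  pose proof (proj1 Hlam) as Hm. pose proof (mug_prob lam g Hm) as Hg.
  rewrite (decomp _ Hg F P B HP HB). rewrite (decomp _ Hm F P B HP HB).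
  apply lsum_ext. intros r Hr.
  destruct (term_cases F P B r HP Hr FB) as [E|E]; rewrite E.
  - rewrite act_chain. destruct HP as [_ [HP1 _]]. destruct (HP1 r Hr) as [Nr _].
    rewrite !(lam_chain lam Hlam); auto. rewrite length_map; auto.
    apply FinFun.Injective_map_NoDup; auto. intros x y; apply act_inj.
  - reflexivity.
Qed.

Lemma inv (lam : (LO N -> Prop) -> R) (Hlam : uniform_lo lam) g X : borel X -> lam (act_set a g X) = lam X.
Proof.
  intro HX. pose proof (proj1 Hlam) as Hm. pose proof (mug_prob lam g Hm) as Hg.
  pose proof (avg_prob _ _ Hm Hg) as Hav.
  apply Rminus_diag_uniq. apply small_zero. intros e He.
  assert (He4 : e / 4 > 0) by lra.
  destruct (approx _ Hav X HX _ He4) as [B [[HB [F FB]] Hle]].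
  cbv beta in Hle.
  pose proof (m_ge0 _ Hm (symdiff X B) (b_sd _ _ HX HB)).
  pose proof (m_ge0 _ Hg (symdiff X B) (b_sd _ _ HX HB)). cbv beta in H0.
  pose proof (m_sd_bound _ Hm X B HX HB).
  pose proof (m_sd_bound _ Hm (act_set a g X) (act_set a g B) (b_act g _ HX) (b_act g _ HB)).
  change (symdiff (act_set a g X) (act_set a g B)) with (act_set a g (symdiff X B)) in H2.
  rewrite (fin_inv lam Hlam g F B FB HB) in H2.
  split_Rabs; lra.
Qed.

Lemma cfilter {A : Type} (P : A -> Prop) (l : list A) : exists l', forall z, In z l' <-> In z l /\ P z.
Proof.
  induction l as [|x l [l' H]].
  - exists []; simpl; tauto.
  - destruct (classic (P x)).
    + exists (x :: l'). intro z; simpl; rewrite H. split; [intros [<-|]|intros [[<-|]]]; tauto.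
    + exists l'. intro z; simpl; rewrite H. split; [tauto|]. intros [[<-|] ?]; tauto.
Qed.

Hypothesis Horb : no_finite_orbits a.

Lemma cover_false (X : list N) : forall C : list (N * N), (forall p, In p C -> In (fst p) X) ->
  ~ (forall g, exists p, In p C /\ a g (fst p) = snd p).
Proof.
  induction X as [|x0 X IH]; intros C HC Hcov.
  - destruct (Hcov (gone K)) as [p [Hp _]]. apply (HC p Hp).
  - destruct (cfilter (fun p : N * N => fst p <> x0) C) as [C' HC'].
    destruct (cfilter (fun p : N * N => fst p = x0) C) as [C0 HC0].
    set (Y0 := map snd C0).
    assert (HY : forall y, In (x0, y) C -> In y Y0).
    { intros y Hy. apply (in_map snd C0 (x0, y)). apply HC0; auto. }
    assert (Hh : exists h, ~ In (a h x0) Y0).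
    { destruct (classic (exists h, ~ In (a h x0) Y0)) as [|Hn]; auto. exfalso.
      apply (Horb x0). exists Y0. intro g. destruct (classic (In (a g x0) Y0)); auto.
      exfalso; apply Hn; exists g; auto. }
    destruct Hh as [h Hh].
    assert (HC'X : forall p, In p C' -> In (fst p) X).
    { intros p Hp. apply HC' in Hp. destruct Hp as [Hp Hne]. destruct (HC p Hp); auto. congruence. }
    assert (Ext : forall Y : list N, exists C2, (forall p, In p C2 -> In (fst p) X) /\
      forall y g, In y Y -> a g x0 = y -> exists p, In p C2 /\ a g (fst p) = snd p).
    { induction Y as [|y Y [C2 [H1 H2]]].
      - exists []; split; [intros p []| intros y g []].
      - destruct (classic (exists t, a t x0 = y)) as [[t Ht]|Hnt].
        + exists (map (fun p => (fst p, a (ginv K (ginv K t)) (a (ginv K h) (snd p)))) C' ++ C2).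
          split.
          * intros p Hp. apply in_app_or in Hp. destruct Hp as [Hp|Hp]; auto.
            apply in_map_iff in Hp. destruct Hp as [q [<- Hq]]. simpl. auto.
          * intros y' g [<-|Hy] Hg.
            -- set (k := gmul K h (gmul K (ginv K t) g)).
               assert (Hk : a k x0 = a h x0).
               { unfold k. rewrite !act_mul, Hg, <- Ht, act_VK; auto. }
               destruct (Hcov k) as [p [Hp Hkp]].
               destruct (classic (fst p = x0)) as [E|E].
               { exfalso. apply Hh. rewrite <- Hk. rewrite <- E, Hkp. apply HY.
                 rewrite <- E. destruct p; auto. }
               exists (fst p, a (ginv K (ginv K t)) (a (ginv K h) (snd p))). split.
               { apply in_or_app; left. apply (in_map (fun p => (fst p, _)) C' p). apply HC'; auto. }
               simpl. unfold k in Hkp. rewrite !act_mul in Hkp. rewrite <- Hkp, act_VK, act_VK. auto.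
            -- destruct (H2 y' g Hy Hg) as [q [Hq Hgq]]. exists q; split; auto. apply in_or_app; right; auto.
        + exists C2. split; auto. intros y' g [<-|Hy] Hg. exfalso; apply Hnt; exists g; auto. apply (H2 y'); auto. }
    destruct (Ext Y0) as [C2 [H1 H2]].
    apply (IH (C' ++ C2)).
    + intros p Hp. apply in_app_or in Hp. destruct Hp; auto.
    + intro g. destruct (Hcov g) as [p [Hp Hgp]].
      destruct (classic (fst p = x0)) as [E|E].
      * destruct (H2 (snd p) g) as [q [Hq Hgq]]. apply HY. rewrite <- E; destruct p; auto.
        rewrite <- E; auto. exists q; split; auto. apply in_or_app; auto.
      * exists p; split; auto. apply in_or_app; left; apply HC'; auto.
Qed.

Lemma neumann (F : list N) : exists h, forall x, In x F -> ~ In (a h x) F.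
Proof.
  destruct (classic (exists h, forall x, In x F -> ~ In (a h x) F)) as [|Hn]; auto. exfalso.
  apply (cover_false F (list_prod F F)).
  - intros [x y] Hp. apply in_prod_iff in Hp. simpl; tauto.
  - intro g. destruct (classic (exists x, In x F /\ In (a g x) F)) as [[x [H1 H2]]|Hx].
    + exists (x, a g x). split; auto. apply in_prod; auto.
    + exfalso. apply Hn. exists g. intros x H1 H2. apply Hx; eauto.
Qed.

Lemma main_erg (lam : (LO N -> Prop) -> R) : uniform_lo lam -> ergodic a lam.
Proof.
  intros Hlam A HA Hinv. pose proof (proj1 Hlam) as Hm.
  assert (Hsq : lam A - lam A * lam A = 0).
  { apply small_zero. intros e He.
    assert (He4 : e / 4 > 0) by lra.
    destruct (approx _ Hm A HA _ He4) as [B [[HB [F FB]] Hle]].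
    destruct (neumann F) as [g Hg].
    set (gA := act_set a g A). set (gB := act_set a g B).
    assert (HgA : borel gA) by (apply b_act; auto).
    assert (HgB : borel gB) by (apply b_act; auto).
    assert (Hind : lam (fun L => B L /\ gB L) = lam B * lam B).
    { rewrite (indep_fin lam Hlam F _ B gB FB (fin_act g F B FB) HB HgB).
      unfold gB. rewrite (fin_inv lam Hlam g F B FB HB); auto.
      intros z Hz1 Hz2. apply in_map_iff in Hz2. destruct Hz2 as [w [Ew Hw]].
      rewrite ginv_inv in Ew. apply (Hg w Hw). rewrite Ew; auto. }
    assert (H1 : lam (fun L => A L /\ ~ gA L) = 0).
    { apply Rle_antisym. rewrite <- (Hinv g). apply (m_mono _ Hm).
      apply b_diff; auto. apply b_sd; auto. intros L H; unfold symdiff; left; auto.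
      apply (m_ge0 _ Hm). apply b_diff; auto. }
    assert (H2 : lam A = lam (fun L => A L /\ gA L)).
    { pose proof (m_diff _ Hm (fun L => A L /\ gA L) A (b_and _ _ HA HgA) HA (fun L H => proj1 H)). cbv beta in H.
      replace (fun L => A L /\ ~ (A L /\ gA L)) with (fun L => A L /\ ~ gA L) in H by (apply sext; intro; tauto).
      lra. }
    assert (H3 : Rabs (lam (fun L => A L /\ gA L) - lam (fun L => B L /\ gB L)) <= lam (symdiff A B) + lam (symdiff gA gB)).
    { eapply Rle_trans. apply (m_sd_bound _ Hm); apply b_and; auto.
      apply (m_sub_le _ Hm); try apply b_sd; try apply b_and; auto.
      intros L; unfold symdiff; tauto. }
    assert (H4 : lam (symdiff gA gB) = lam (symdiff A B)).
    { change (symdiff gA gB) with (act_set a g (symdiff A B)). apply (inv lam Hlam). apply b_sd; auto. }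
    pose proof (m_sd_bound _ Hm A B HA HB).
    pose proof (m_ge0 _ Hm A HA). pose proof (m_le1 _ Hm A HA).
    pose proof (m_ge0 _ Hm B HB). pose proof (m_le1 _ Hm B HB).
    assert (H9 : Rabs (lam B * lam B - lam A * lam A) <= e / 2).
    { replace (lam B * lam B - lam A * lam A) with ((lam B - lam A) * (lam B + lam A)) by ring.
      rewrite Rabs_mult. rewrite (Rabs_pos_eq (lam B + lam A)) by lra.
      rewrite Rabs_minus_sym. apply Rle_trans with (e / 4 * 2). apply Rmult_le_compat; try lra.
      apply Rabs_pos. lra. }
    rewrite Hind, H4 in H3. rewrite <- H2 in H3. split_Rabs; lra. }
  replace (lam A - lam A * lam A) with (lam A * (1 - lam A)) in Hsq by ring.
  apply Rmult_integral in Hsq. destruct Hsq; [left|right]; lra.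
Qed.

End Grp.
End Gen.

Theorem lemma2 (N : Type) (K : Group) (a : Action K N)
  (HN : countably_infinite N) (Horb : no_finite_orbits a)
  (lambda : (LO N -> Prop) -> R) (Hlam : uniform_lo lambda) :
  ergodic a lambda.
Proof.
  destruct HN as [f _].
  exact (main_erg N (f 0%nat) K a Horb lambda Hlam).
Qed.
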